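(* Let $U=(E,\mathcal{D},\rho)$ be a U-matroid with lattice of flats $\L$. Let $\mathcal{D}'\subseteq\mathcal{D}$ be an accessible distributive sublattice, and let $\L'$ be the lattice of flats of the restriction $(E,\mathcal{D}',\rho|_{\mathcal{D}'})$. Then \[\L'=\{\inf_{\mathcal{D}'}(A): A\in\L\}.\]
   Context: An accessible distributive lattice on a finite set $E$ is a family $\mathcal{D}\subseteq 2^E$ containing $\emptyset$ and $E$, closed under union and intersection, such that every nonempty $A\in\mathcal{D}$ contains some $x$ with $A\setminus\{x\}\in\mathcal{D}$. A U-matroid is a triple $(E,\mathcal{D},\rho)$ with $\rho:\mathcal{D}\to\mathbb{N}$ satisfying $\rho(\emptyset)=0$; $\rho(A)\le\rho(B)$ whenever $A\subseteq B$; $\rho(A)+\rho(B)\ge\rho(A\cup B)+\rho(A\cap B)$; and $\rho(A\cup\{e\})-\rho(A)\le1$ whenever $A,A\cup\{e\}\in\mathcal{D}$. The lattice of flats of $(E,\mathcal{D},\rho)$ is $\L=\{A\in\mathcal{D}:\rho(B)>\rho(A)\text{ for all }B\in\mathcal{D}\text{ with }B\supsetneq A\}$. For $A\subseteq E$, $\inf_{\mathcal{D}'}(A)=\bigcup\{B\in\mathcal{D}':B\subseteq A\}$. *)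

(* Defs.v *)
From mathcomp Require Import all_boot.
Set Implicit Arguments. Unset Strict Implicit. Unset Printing Implicit Defensive.

Section UMatroid.
Variable E : finType.

Definition accessible_distr_lattice (D : {set {set E}}) : Prop :=
  [/\ set0 \in D, [set: E] \in D,
      (forall A B, A \in D -> B \in D -> A :|: B \in D),
      (forall A B, A \in D -> B \in D -> A :&: B \in D) &
      (forall A, A \in D -> A != set0 -> exists2 x, x \in A & A :\ x \in D)].

(* rho is a total function on {set E}; only its values on D matter. *)
Definition umatroid (D : {set {set E}}) (rho : {set E} -> nat) : Prop :=
  [/\ accessible_distr_lattice D,
      rho set0 = 0,
      (forall A B, A \in D -> B \in D -> A \subset B -> rho A <= rho B),
      (forall A B, A \in D -> B \in D ->
         rho (A :|: B) + rho (A :&: B) <= rho A + rho B) &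
      (forall A e, A \in D -> A :|: [set e] \in D -> rho (A :|: [set e]) <= rho A + 1)].

Definition flats (D : {set {set E}}) (rho : {set E} -> nat) : {set {set E}} :=
  [set A in D | [forall B in D, (A \proper B) ==> (rho A < rho B)]].

Definition infD (D' : {set {set E}}) (A : {set E}) : {set E} :=
  \bigcup_(B in D' | B \subset A) B.

End UMatroid.

(* Main.v *)
Require Import Defs.
From mathcomp Require Import all_boot.

Section Aux.
Variable E : finType.

Lemma infD_in (D' : {set {set E}}) (A : {set E}) : accessible_distr_lattice D' -> infD D' A \in D'.
Proof.
case=> D0 _ DU _ _; rewrite /infD.
apply: (big_ind (fun X => X \in D')) => //.
by move=> B /andP[].
Qed.

Lemma infD_sub (D' : {set {set E}}) (A : {set E}) : infD D' A \subset A.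
Proof. by apply/bigcupsP => B /andP[]. Qed.

Lemma infD_max (D' : {set {set E}}) (A B : {set E}) : B \in D' -> B \subset A -> B \subset infD D' A.
Proof. by move=> h1 h2; apply: (bigcup_sup B); rewrite h1 h2. Qed.
End Aux.

Theorem theorem4p20 (E : finType) (D D' : {set {set E}}) (rho : {set E} -> nat) :
  umatroid D rho ->
  accessible_distr_lattice D' -> D' \subset D ->
  flats D' rho = [set infD D' A | A in flats D rho].
Proof.
move=> [[D0 DT DU DI _] rho0 mono sub _] HD' /subsetP sD'.
apply/setP => F; apply/idP/imsetP.
- rewrite inE => /andP[FD' /forall_inP Fflat].
  have FD := sD' _ FD'.
  set S := [set B in D | (F \subset B) && (rho B == rho F)].
  have FS : F \in S by rewrite inE FD subxx eqxx.
  case: (@arg_maxnP _ F (mem S) (fun B => #|B|) FS) => A AS Amax.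
  have AS2 : A \in S := AS; move: AS2; rewrite /S inE => /andP[AD /andP[FA /eqP rA]].
  have Aflat : A \in flats D rho.
    rewrite inE AD; apply/forall_inP => B BD; apply/implyP => AB.
    have le := mono _ _ AD BD (proper_sub AB).
    rewrite ltn_neqAle le andbT; apply/negP => /eqP e.
    have BS : B \in S.
      by rewrite /S inE BD -e rA eqxx (subset_trans FA (proper_sub AB)).
    have h : #|B| <= #|A| := Amax B BS. by move: h; rewrite leqNgt (proper_card AB).
  exists A => //.
  have iD' := @infD_in _ D' A HD'.
  have Fi : F \subset infD D' A by apply: infD_max.
  have ri : rho (infD D' A) <= rho F.
    by rewrite -rA; apply: mono => //; [apply: sD' | apply: infD_sub].
  apply/eqP; rewrite eqEsubset Fi /=; apply/negPn/negP => nsub.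
  have pr : F \proper infD D' A by rewrite properEneq Fi andbT; by apply: contra nsub => /eqP <-.
  by have := implyP (Fflat _ iD') pr; rewrite ltnNge ri.
- case=> A; rewrite inE => /andP[AD /forall_inP Aflat] ->.
  have iD' := @infD_in _ D' A HD'.
  rewrite inE iD'; apply/forall_inP => B BD'; apply/implyP => pr.
  have BD := sD' _ BD'.
  have nBA : ~~ (B \subset A).
    apply/negP => BA; have := @infD_max _ D' A B BD' BA.
    by move=> h; move: pr; rewrite properE h andbF.
  have ApB : A \proper A :|: B.
    by rewrite properE subsetUl /=; apply: contra nBA => h; apply: subset_trans h; apply: subsetUr.
  have lt := implyP (Aflat _ (DU _ _ AD BD)) ApB.
  have s := sub _ _ AD BD.
  have le : rho (infD D' A) <= rho (A :&: B).
    apply: mono => //; first by apply: sD'.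
      by apply: DI.
    by rewrite subsetI infD_sub (proper_sub pr).
  by apply: (leq_ltn_trans le); rewrite -(ltn_add2l (rho A)) (leq_trans _ s) // ltn_add2r.
Qed.
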